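(* Let $G$ be the final graph of the uncoordinated construction (described in the context) on a set $P\subset\mathbb{R}^d$ of $n$ points with parameter $s>1$. Then $G$ is a spanner with stretch factor $(s+1)/(s-1)$ (for all $p,q\in P$ the shortest path length in $G$, with edges weighted by Euclidean length, is at most $\frac{s+1}{s-1}|pq|$) and $G$ has $O(n s^d)$ edges, where the implied constant depends only on $d$.
   Context: Fix $d\ge 1$; $|xy|$ is Euclidean distance. Uncoordinated construction: start with the graph $G$ on vertex set $P$ with no edges. Every ordered pair $(p,q)$ of distinct points of $P$ is processed exactly once, in an arbitrary order, one at a time. When $(p,q)$ is processed, the edge $pq$ is added to $G$ unless $G$ currently contains an edge whose endpoints can be labeled $p',q'$ with $|pp'|\le |p'q'|/(2s+2)$ and $|qq'|\le |p'q'|/(2s+2)$. $G$ is the graph after all pairs are processed. *)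

(* Defs.v *)
From mathcomp Require Import all_boot all_order all_algebra.
Set Implicit Arguments. Unset Strict Implicit. Unset Printing Implicit Defensive.
Import Order.TTheory GRing.Theory Num.Theory.
Local Open Scope ring_scope.

Section Defs.
Variables (R : rcfType) (d : nat).
Notation pt := 'rV[R]_d.

Definition dist (x y : pt) : R := Num.sqrt (\sum_(i < d) (x 0 i - y 0 i) ^+ 2).

Definition blocks_oriented (s : R) (p q p' q' : pt) : bool :=
  (dist p p' <= dist p' q' / (2 * s + 2)) && (dist q q' <= dist p' q' / (2 * s + 2)).

Definition blocks (s : R) (pq : pt * pt) (e : pt * pt) : bool :=
  blocks_oriented s pq.1 pq.2 e.1 e.2 || blocks_oriented s pq.1 pq.2 e.2 e.1.

Definition process (s : R) (E : seq (pt * pt)) (pq : pt * pt) : seq (pt * pt) :=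
  if has (blocks s pq) E then E else rcons E pq.

Definition uncoordinated (s : R) (ord : seq (pt * pt)) : seq (pt * pt) :=
  foldl (process s) [::] ord.

Definition valid_order (P : seq pt) (ord : seq (pt * pt)) : Prop :=
  uniq ord /\ forall p q : pt, ((p, q) \in ord) = [&& p \in P, q \in P & p != q].

Definition adj (E : seq (pt * pt)) (x y : pt) : bool := ((x, y) \in E) || ((y, x) \in E).

Fixpoint path_len (x : pt) (w : seq pt) : R :=
  if w is y :: w' then dist x y + path_len y w' else 0.

End Defs.

(* Main.v *)
Require Import Defs.
From mathcomp Require Import all_boot all_order all_algebra.
From mathcomp Require Import ring lra.
Set Implicit Arguments. Unset Strict Implicit. Unset Printing Implicit Defensive.
Import Order.TTheory GRing.Theory Num.Theory.
Local Open Scope ring_scope.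

Section Geo.
Variables (R : rcfType) (d : nat).
Notation pt := 'rV[R]_d.

Lemma dist_ge0 (x y : pt) : 0 <= dist x y.
Proof. exact: sqrtr_ge0. Qed.

Lemma distC (x y : pt) : dist x y = dist y x.
Proof.
rewrite /dist; congr Num.sqrt; apply: eq_bigr => i _.
by rewrite -sqrrN opprB.
Qed.

Lemma distxx (x : pt) : dist x x = 0.
Proof.
rewrite /dist big1 ?sqrtr0 // => i _; by rewrite subrr expr0n.
Qed.

Lemma sumsq_ge0 (a : 'I_d -> R) : 0 <= \sum_i a i ^+ 2.
Proof. by apply: sumr_ge0 => i _; exact: sqr_ge0. Qed.

Lemma dist_eq0 (x y : pt) : dist x y = 0 -> x = y.
Proof.
rewrite /dist => /eqP; rewrite sqrtr_eq0 => H.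
have H0 : \sum_i (x 0 i - y 0 i) ^+ 2 = 0.
  by apply/eqP; rewrite eq_le H sumsq_ge0.
apply/rowP => i.
have := psumr_eq0P (P := predT) (F := fun i => (x 0 i - y 0 i) ^+ 2)
  (fun i _ => sqr_ge0 _) H0 (i := i) isT.
by move/eqP; rewrite sqrf_eq0 subr_eq0 => /eqP.
Qed.

Lemma dist_gt0 (x y : pt) : x != y -> 0 < dist x y.
Proof.
move=> nxy; rewrite lt_def dist_ge0 andbT; apply/eqP => /dist_eq0 exy.
by rewrite exy eqxx in nxy.
Qed.

Lemma coord_le_dist (x y : pt) i : `|x 0 i - y 0 i| <= dist x y.
Proof.
rewrite /dist -sqrtr_sqr ler_wsqrtr //.
rewrite (bigD1 i) //= lerDl; apply: sumr_ge0 => j _; exact: sqr_ge0.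
Qed.

Lemma CS (a b : 'I_d -> R) :
  (\sum_i a i * b i) ^+ 2 <= (\sum_i a i ^+ 2) * (\sum_i b i ^+ 2).
Proof.
set A := \sum_i a i ^+ 2; set B := \sum_i b i ^+ 2; set C := \sum_i a i * b i.
have [B0|Bn0] := eqVneq B 0.
  have bz : forall i, b i = 0.
    move=> i; have := psumr_eq0P (P := predT) (F := fun i => b i ^+ 2)
      (fun i _ => sqr_ge0 _) B0 (i := i) isT.
    by move/eqP; rewrite sqrf_eq0 => /eqP.
  have -> : C = 0 by rewrite /C big1 // => i _; rewrite bz mulr0.
  by rewrite B0 expr0n mulr0.
have Bp : 0 < B by rewrite lt_def Bn0 sumsq_ge0.
have key : 0 <= \sum_i (a i * B - b i * C) ^+ 2 by exact: sumsq_ge0.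
have E : \sum_i (a i * B - b i * C) ^+ 2 = B * (A * B - C ^+ 2).
  have -> : \sum_i (a i * B - b i * C) ^+ 2 =
     \sum_i (a i ^+ 2 * (B * B) - (a i * b i) * (2 * B * C) + b i ^+ 2 * (C * C)).
    by apply: eq_bigr => i _; ring.
  rewrite big_split /= sumrB -!mulr_suml -/A -/B -/C; ring.
rewrite E in key.
have : 0 <= A * B - C ^+ 2 by rewrite -(pmulr_rge0 _ Bp).
by rewrite subr_ge0.
Qed.

Lemma dist_triangle (x y z : pt) : dist x z <= dist x y + dist y z.
Proof.
rewrite /dist.
set a := fun i => x 0 i - y 0 i; set b := fun i => y 0 i - z 0 i.
have -> : \sum_i (x 0 i - z 0 i) ^+ 2 = \sum_i (a i + b i) ^+ 2.
  by apply: eq_bigr => i _; rewrite /a /b; congr (_ ^+ 2); ring.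
rewrite -/(\sum_i a i ^+ 2) -/(\sum_i b i ^+ 2).
set A := \sum_i a i ^+ 2; set B := \sum_i b i ^+ 2.
have A0 : 0 <= A by exact: sumsq_ge0.
have B0 : 0 <= B by exact: sumsq_ge0.
have S0 : 0 <= Num.sqrt A + Num.sqrt B by rewrite addr_ge0 // sqrtr_ge0.
rewrite -(ger0_norm S0) -sqrtr_sqr ler_wsqrtr //.
have -> : \sum_i (a i + b i) ^+ 2 = A + B + 2 * \sum_i a i * b i.
  rewrite /A /B -big_split /= mulr_sumr -big_split /=.
  by apply: eq_bigr => i _; ring.
rewrite sqrrD !sqr_sqrtr //.
set C := \sum_i a i * b i.
suff h : C <= Num.sqrt A * Num.sqrt B by rewrite mulr2n; lra.
apply: (le_trans (ler_norm C)).
rewrite -sqrtrM // -sqrtr_sqr ler_wsqrtr //; exact: CS.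
Qed.

End Geo.

Section Unc.
Variables (R : rcfType) (d : nat).
Notation pt := 'rV[R]_d.
Variable s : R.

Definition nb (E : seq (pt * pt)) : Prop :=
  forall i, (i < size E)%N -> ~~ has (blocks s (nth (0, 0) E i)) (take i E).

Lemma nb_rcons E x : nb E -> ~~ has (blocks s x) E -> nb (rcons E x).
Proof.
move=> nbE hx i; rewrite size_rcons ltnS leq_eqVlt => /orP [/eqP ->|lti].
  by rewrite nth_rcons ltnn eqxx -cats1 takel_cat // take_size.
by rewrite nth_rcons lti -cats1 takel_cat ?(ltnW lti) //; exact: nbE.
Qed.

Lemma nb_rconsE E x : nb (rcons E x) -> nb E /\ ~~ has (blocks s x) E.
Proof.
move=> h; split.
  move=> i lti; have := h i; rewrite size_rcons ltnS (ltnW lti) nth_rcons lti.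
  by rewrite -cats1 takel_cat ?(ltnW lti) //; apply.
have := h (size E); rewrite size_rcons ltnSn nth_rcons ltnn eqxx.
by rewrite -cats1 takel_cat // take_size; apply.
Qed.

Lemma nb_uniq E : (forall e : pt * pt, blocks s e e) -> nb E -> uniq E.
Proof.
move=> bee; elim/last_ind: E => [//|E x IH] /nb_rconsE [nbE hx].
rewrite rcons_uniq IH // andbT; apply/negP => xE.
by move/hasP: hx; apply; exists x.
Qed.

Lemma nb_mutual E e f : nb E -> e \in E -> f \in E ->
  blocks s e f -> blocks s f e -> e = f.
Proof.
elim/last_ind: E => [//|E x IH] /nb_rconsE [nbE hx].
rewrite !mem_rcons !inE => /orP [/eqP ->|eE] /orP [/eqP ->|fE] // bef bfe.
- by case/hasP: hx; exists f.
- by case/hasP: hx; exists e.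
- exact: IH.
Qed.

Lemma unc_props ord (E0 : seq (pt * pt)) :
  let E := foldl (process s) E0 ord in
  [/\ {subset E0 <= E}, (forall e, e \in E -> e \in E0 \/ e \in ord),
      (forall pq, pq \in ord -> (pq \in E) || has (blocks s pq) E)
    & (nb E0 -> nb E)].
Proof.
elim: ord E0 => [|x ord IH] E0 /=.
  by split => // e ->; left.
have [sub1 mem1 cov1 nb1] := IH (process s E0 x).
have sub0 : {subset E0 <= process s E0 x}.
  by rewrite /process; case: ifP => _ y yE //; rewrite mem_rcons inE yE orbT.
split.
- by move=> y /sub0 /sub1.
- move=> e /mem1 [|]; last by move=> h; right; rewrite inE h orbT.
  rewrite /process; case: ifP => _ h; first by left.
  move: h; rewrite mem_rcons inE => /orP [/eqP ->|h]; last by left.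
  by right; rewrite inE eqxx.
- move=> pq; rewrite inE => /orP [/eqP ->|]; last exact: cov1.
  case hb: (has (blocks s x) E0).
    apply/orP; right; case/hasP: hb => y yE hy; apply/hasP; exists y => //.
    exact: sub1 (sub0 _ yE).
  by rewrite sub1 // /process hb mem_rcons inE eqxx.
- move=> nb0; apply: nb1; rewrite /process; case: ifP => // hb.
  by apply: nb_rcons => //; rewrite hb.
Qed.

End Unc.

Lemma count_strict (T : eqType) (a b : pred T) (r : seq T) z :
  (forall x, a x -> b x) -> z \in r -> b z -> ~~ a z -> (count a r < count b r)%N.
Proof.
move=> ab; elim: r => [//|x r IH]; rewrite inE => /orP [/eqP <-|zr] bz naz /=.
  rewrite bz (negbTE naz) add0n add1n ltnS; exact: sub_count.
have := IH zr bz naz; case ax: (a x); first by rewrite (ab _ ax) ltn_add2l.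
by rewrite add0n => h; apply: (leq_trans h); rewrite leq_addl.
Qed.

Section Span.
Variables (R : rcfType) (d : nat).
Notation pt := 'rV[R]_d.

Lemma path_len_cat (x : pt) w1 w2 :
  path_len x (w1 ++ w2) = path_len x w1 + path_len (last x w1) w2.
Proof. by elim: w1 x => [|y w1 IH] x /=; rewrite ?add0r // IH addrA. Qed.

Lemma spanner (s : R) (P : seq pt) ord : 1 < s -> valid_order P ord ->
  let E := uncoordinated s ord in
  forall p q, p \in P -> q \in P ->
    exists w : seq pt, path (adj E) p w /\ last p w = q /\
       path_len p w <= (s + 1) / (s - 1) * dist p q.
Proof.
move=> s1 [uo vo] E.
have [_ memE covE _] := unc_props s ord [::].
rewrite -/(uncoordinated s ord) -/E in memE covE.
have EP : forall e, e \in E -> e.1 \in P /\ e.2 \in P.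
  move=> [e1 e2] /memE [//|]; rewrite vo => /and3P [h1 h2 _]; by split.
have cov : forall p q, p \in P -> q \in P -> p != q ->
    ((p, q) \in E) || has (blocks s (p, q)) E.
  by move=> p q pP qP npq; apply: covE; rewrite vo pP qP.
set t := (s + 1) / (s - 1).
have s1' : 0 < s - 1 by rewrite subr_gt0.
have t1 : 1 <= t by rewrite /t ler_pdivlMr // mul1r lerD2l; lra.
have t0 : 0 <= t by lra.
have c0 : 0 < 2 * s + 2 by lra.
have tc : (t - 1) * (2 * s + 2) = 4 * t.
  rewrite /t; field; apply/eqP => h; lra.
pose allp := [seq (x, y) | x <- P, y <- P].
pose cnt (p q : pt) := count (fun xy : pt * pt => dist xy.1 xy.2 < dist p q) allp.
suff H : forall n p q, (cnt p q < n)%N -> p \in P -> q \in P ->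
    exists w : seq pt, path (adj E) p w /\ last p w = q /\
       path_len p w <= t * dist p q.
  by move=> p q pP qP; apply: (H (cnt p q).+1).
elim=> [//|n IH] p q hc pP qP.
have [->|npq] := eqVneq p q.
  by exists [::]; rewrite /= distxx mulr0.
have Dp : 0 < dist p q by exact: dist_gt0.
case/orP: (cov p q pP qP npq) => [inE|hb].
  exists [:: q]; rewrite /= /adj inE /= addr0; split => //; split => //.
  by rewrite -{1}(mul1r (dist p q)) ler_wpM2r // dist_ge0.
have [x [y [axy xP yP hx hy]]] : exists x y, [/\ adj E x y, x \in P, y \in P,
    dist p x <= dist x y / (2 * s + 2) & dist q y <= dist x y / (2 * s + 2)].
  case/hasP: hb => [[f1 f2]] fE; have [/= f1P f2P] := EP _ fE.
  rewrite /blocks /blocks_oriented /= => /orP [/andP [h1 h2]|/andP [h1 h2]].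
    by exists f1, f2; split => //; rewrite /adj fE.
  exists f2, f1; split => //.
  by rewrite /adj fE orbT.
set a := dist p x in hx *; set b := dist q y in hy *.
set L := dist x y in hx hy *; set D := dist p q in Dp *.
rewrite ler_pdivlMr // in hx; rewrite ler_pdivlMr // in hy.
have hL : L <= a + D + b.
  apply: (le_trans (dist_triangle x p y)); rewrite (distC x p) -/a -addrA lerD2l.
  apply: (le_trans (dist_triangle p q y)); by rewrite -/D -/b.
have a0 : 0 <= a by exact: dist_ge0.
have b0 : 0 <= b by exact: dist_ge0.
have aD : a < D by nra.
have bD : b < D by nra.
have cntlt : forall u v, u \in P -> v \in P -> dist u v < D -> (cnt u v < cnt p q)%N.
  move=> u v uP vP uv; apply: (count_strict (z := (u, v))).
  - by move=> z /= h; exact: (lt_trans h).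
  - by apply/allpairsP; exists (u, v).
  - by [].
  - by rewrite /= ltxx.
have [w1 [pw1 [lw1 len1]]] := IH p x (leq_trans (cntlt p x pP xP aD) hc) pP xP.
have [w2 [pw2 [lw2 len2]]] : exists w : seq pt, path (adj E) y w /\ last y w = q /\
       path_len y w <= t * dist y q.
  apply: IH => //; apply: leq_trans (cntlt y q yP qP _) hc; by rewrite distC.
rewrite distC -/b in len2; rewrite -/a in len1.
exists (w1 ++ y :: w2); split; first by rewrite cat_path lw1 /= axy pw1 pw2.
split; first by rewrite last_cat lw1.
rewrite path_len_cat lw1 /= -/L.
have key : 2 * t * (a + b) <= (t - 1) * L.
  have h1 : (a + b) * (2 * s + 2) <= 2 * L by lra.
  have h2 : 2 * t * ((a + b) * (2 * s + 2)) <= 2 * t * (2 * L).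
    by rewrite ler_wpM2l // mulr_ge0.
  rewrite -(ler_pM2r c0).
  have -> : (t - 1) * L * (2 * s + 2) = 4 * t * L by rewrite -tc; ring.
  lra.
have h3 : t * L <= t * (a + D + b) by rewrite ler_wpM2l.
lra.
Qed.

End Span.

Lemma ex_max (R : realDomainType) (T : eqType) (f : T -> R) (s : seq T) :
  s != [::] -> exists2 x, x \in s & forall y, y \in s -> f y <= f x.
Proof.
elim: s => [//|a s IH] _.
have [->|sn] := eqVneq s [::].
  by exists a; rewrite ?inE ?eqxx // => y; rewrite inE => /eqP ->.
have [b bs hb] := IH sn.
have [fab|fba] := lerP (f a) (f b).
  exists b; first by rewrite inE bs orbT.
  by move=> y; rewrite inE => /orP [/eqP ->|]; [|apply: hb].
exists a; first by rewrite inE eqxx.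
move=> y; rewrite inE => /orP [/eqP ->//|ys].
exact: le_trans (hb y ys) (ltW fba).
Qed.

Section Net.
Variables (R : rcfType) (d : nat).
Notation pt := 'rV[R]_d.
Variable M : R.

Definition dmin (x : pt) (Q : seq pt) : R :=
  foldr (fun q m => Num.min (dist x q) m) M Q.

Lemma dmin_le x Q q : q \in Q -> dmin x Q <= dist x q.
Proof.
elim: Q => [//|a Q IH]; rewrite inE => /orP [/eqP ->|qQ] /=; rewrite ge_min.
  by rewrite lexx.
by rewrite IH ?orbT.
Qed.

Lemma dmin_ex x Q : dmin x Q < M -> exists2 q, q \in Q & dmin x Q = dist x q.
Proof.
elim: Q => [|a Q IH] /=; first by rewrite ltxx.
rewrite -/(dmin x Q).
have [h|h] := leP (dist x a) (dmin x Q).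
  by move=> _; exists a; rewrite ?inE ?eqxx.
move=> /IH [q qQ ->]; exists q => //.
by rewrite inE qQ orbT.
Qed.

Definition gprop (P G : seq pt) := forall j, (j < size G)%N -> forall z, z \in P ->
  z \notin take j G -> dmin z (take j G) <= dmin (nth 0 G j) (take j G).

Lemma greedy_prefix (P : seq pt) : uniq P -> forall m, (m <= size P)%N ->
  exists G, [/\ uniq G, {subset G <= P}, size G = m & gprop P G].
Proof.
move=> uP; elim=> [|m IH] hm.
  by exists [::]; split => // j.
have [G [uG sGP szG gG]] := IH (ltnW hm).
set rest := [seq z <- P | z \notin G].
have rn : rest != [::].
  apply/eqP => r0.
  have : {subset P <= G}.
    move=> z zP; apply/negPn/negP => zG.
    have : z \in rest by rewrite mem_filter zG zP.
    by rewrite r0.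
  move/(uniq_leq_size uP); rewrite szG => h.
  by have := leq_trans hm h; rewrite ltnn.
have [z zr hz] := ex_max (fun z => dmin z G) rn.
move: zr; rewrite mem_filter => /andP [zG zP].
exists (rcons G z); split.
- by rewrite rcons_uniq zG uG.
- by move=> y; rewrite mem_rcons inE => /orP [/eqP ->|/sGP].
- by rewrite size_rcons szG.
move=> j; rewrite size_rcons ltnS leq_eqVlt => /orP [/eqP ->|lj] y yP.
  rewrite nth_rcons ltnn eqxx -cats1 takel_cat // take_size => yG.
  by apply: hz; rewrite mem_filter yG yP.
by rewrite nth_rcons lj -cats1 takel_cat ?(ltnW lj) //; apply: gG.
Qed.

Lemma net_exists (P : seq pt) : uniq P -> 0 < M -> exists rad : pt -> R,
  [/\ forall v w, v \in P -> w \in P -> v != w -> Num.min (rad v) (rad w) <= dist v w,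
      forall v, v \in P -> 0 < rad v &
      forall x t, x \in P -> 0 <= t -> t <= M ->
        exists2 A, A \in P & (t <= rad A) && (dist x A <= t)].
Proof.
move=> uP M0.
have [G [uG sGP szG gG]] := greedy_prefix uP (leqnn (size P)).
have [_ eGP] := uniq_min_size uG sGP (eq_leq (esym szG)).
pose rad x := dmin x (take (index x G) G).
have radn : forall j, (j < size G)%N -> rad (nth 0 G j) = dmin (nth 0 G j) (take j G).
  by move=> j hj; rewrite /rad index_uniq.
exists rad; split.
- move=> v w vP wP nvw; rewrite -!eGP in vP wP.
  have [ivw|iwv|ieq] := ltngtP (index v G) (index w G).
  + rewrite ge_min; apply/orP; right; rewrite distC; apply: dmin_le.
    by rewrite in_take.
  + rewrite ge_min; apply/orP; left; apply: dmin_le; by rewrite in_take.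
  + by move: nvw; rewrite -(nth_index 0 vP) -(nth_index 0 wP) ieq eqxx.
- move=> v vP; rewrite -eGP in vP; rewrite /rad.
  have [lt|] := ltP (dmin v (take (index v G) G)) M.
    have [q qt ->] := dmin_ex lt; apply: dist_gt0; apply/eqP => qv.
    by move: qt; rewrite -qv in_take ?ltnn // qv.
  by move=> h; exact: lt_le_trans M0 h.
move=> x t xP t0 tM; rewrite -eGP in xP.
set k := find (fun g => rad g < t) G.
have [ixk|] := ltnP (index x G) k.
  exists x; first by rewrite -eGP.
  rewrite distxx; apply/andP; split; last first.
    by [].
  have := before_find 0 ixk; rewrite nth_index // => /negbT; by rewrite -leNgt.
move=> kx.
have kG : (k < size G)%N by apply: leq_ltn_trans kx _; rewrite index_mem.
have hk : rad (nth 0 G k) < t.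
  by have := nth_find 0 (a := fun g => rad g < t) (s := G); rewrite has_find; apply.

rewrite radn // in hk.
have xt : x \notin take k G by rewrite in_take // -leqNgt.
have hx := gG k kG x (sGP _ xP) xt.
have lt : dmin x (take k G) < M by apply: le_lt_trans hx _; apply: lt_le_trans hk tM.
have [q qt qe] := dmin_ex lt.
have qG : q \in G := mem_take qt.
exists q; first by rewrite -eGP.
apply/andP; split; last by rewrite -qe; apply: ltW; exact: le_lt_trans hx hk.
have := before_find 0 (index_ltn qt); rewrite nth_index // => /negbT.
by rewrite -leNgt.
Qed.

End Net.

Lemma nat_floor (R : realDomainType) (L : nat) (y : R) : 0 <= y -> y < L%:R ->
  exists k, (k < L)%N /\ (k%:R <= y) && (y < k%:R + 1).
Proof.
elim: L => [|L IH] y0; first by rewrite ltNge y0.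
have [yL|Ly] := ltP y L%:R.
  by move=> _; have [k [kL hk]] := IH y0 yL; exists k; split => //; rewrite ltnS ltnW.
by move=> h; exists L; split => //; rewrite Ly /=; rewrite -natr1 in h.
Qed.

Lemma nat_ceil (R : realDomainType) (m : nat) (x : R) : 0 <= x -> x < m%:R ->
  exists N : nat, x <= N%:R /\ N%:R <= x + 1.
Proof.
move=> x0 xm; have [k [_ /andP [h1 h2]]] := nat_floor x0 xm.
exists k.+1; rewrite -natr1; split; lra.
Qed.

Lemma sq_lt (R : realDomainType) (u v : R) : `|u| < v -> u ^+ 2 < v ^+ 2.
Proof. move=> h; rewrite -real_normK ?num_real //; have h0 := normr_ge0 u; nra. Qed.

Section Pack.
Variables (R : rcfType) (d : nat).
Notation pt := 'rV[R]_d.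

Lemma packing (Q : seq pt) (X : pt) (rho Lam : R) (N : nat) :
  (0 < d)%N -> 0 < rho -> uniq Q ->
  (forall Y Y', Y \in Q -> Y' \in Q -> Y != Y' -> rho <= dist Y Y') ->
  (forall Y, Y \in Q -> dist X Y <= Lam * rho) ->
  d%:R * Lam <= N%:R -> (size Q <= (2 * N + 2) ^ d)%N.
Proof.
move=> d0 r0 uQ sep inB dLN.
pose L := (2 * N + 1).+1.
pose c : R := d%:R / rho.
have dpos : (0 : R) < d%:R by rewrite ltr0n.
have c0 : 0 < c by rewrite divr_gt0.
have rc : rho * c = d%:R by rewrite /c mulrC -mulrA mulVf ?mulr1 // gt_eqF.
pose z (Y : pt) (i : 'I_d) : R := (Y 0 i - X 0 i) * c + N%:R + 1.
have zb : forall Y i, Y \in Q -> 0 <= z Y i /\ z Y i < L%:R.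
  move=> Y i YQ; have h := coord_le_dist X Y i; have h2 := inB Y YQ.
  have h3 := le_trans h h2; rewrite distC in h; move: h3; rewrite ler_norml => /andP [l1 l2].
  set e := X 0 i - Y 0 i in l1 l2.
  have e1 : e * c <= Lam * rho * c by rewrite ler_pM2r.
  have e2 : - (Lam * rho) * c <= e * c by rewrite ler_pM2r.
  have hl : Lam * rho * c = Lam * d%:R by rewrite -mulrA rc.
  have -> : z Y i = - (e * c) + N%:R + 1 by rewrite /z /e; ring.
  rewrite /L -natr1 natrD natrM; split; nra.
pose cell (Y : pt) : {ffun 'I_d -> 'I_L} :=
  [ffun i => odflt ord0 [pick k : 'I_L | (k%:R <= z Y i) && (z Y i < k%:R + 1)]].
have cellP : forall Y i, Y \in Q -> ((cell Y i)%:R <= z Y i) && (z Y i < (cell Y i)%:R + 1).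
  move=> Y i YQ; rewrite /cell ffunE; case: pickP => [k //|none].
  have [h0 h1] := zb Y i YQ; have [k [kL hk]] := nat_floor h0 h1.
  by have := none (Ordinal kL); rewrite /= hk.
have inj : {in Q &, injective cell}.
  move=> Y Y' YQ Y'Q ceq; apply/eqP; apply/negP => /negP nY.
  have := sep Y Y' YQ Y'Q nY; apply/negP; rewrite -ltNge.
  have ci : forall i, `|Y 0 i - Y' 0 i| < rho / d%:R.
    move=> i; have := cellP Y i YQ; have := cellP Y' i Y'Q; rewrite ceq.
    move=> /andP [a1 a2] /andP [b1 b2].
    have hd : `|z Y i - z Y' i| < 1 by rewrite ltr_norml; apply/andP; split; lra.
    have e : z Y i - z Y' i = (Y 0 i - Y' 0 i) * c by rewrite /z; ring.
    move: hd; rewrite e normrM (gtr0_norm c0) -ltr_pdivlMr // mul1r /c invf_div //.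
  rewrite /dist -(ger0_norm (ltW r0)) -sqrtr_sqr ltr_sqrt ?exprn_gt0 //.
  have i0 : 'I_d := Ordinal d0.
  apply: (@lt_le_trans _ _ (\sum_(i < d) (rho / d%:R) ^+ 2)).
    rewrite (bigD1 i0) // [X in _ < X](bigD1 i0) //=; apply: ltr_leD.
      exact: sq_lt (ci i0).
    by apply: ler_sum => i _; exact: ltW (sq_lt (ci i)).
  rewrite sumr_const card_ord.
  set u := (rho / _) ^+ 2; rewrite -mulr_natl /u ?mulr1.
  have d1 : (1 : R) <= d%:R by rewrite ler1n.
  have -> : d%:R * (rho / d%:R) ^+ 2 = rho ^+ 2 / d%:R.
    by field; rewrite gt_eqF.
  rewrite ler_pdivrMr //; have := sqr_ge0 rho; nra.
have : (size [seq cell Y | Y <- Q] <= #|{ffun 'I_d -> 'I_L}|)%N.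
  rewrite cardE; apply: uniq_leq_size; first by rewrite map_inj_in_uniq.
  by move=> f _; rewrite mem_enum.
rewrite size_map card_ffun !card_ord => h.
by rewrite (_ : (2 * N + 2 = L)%N) // /L addnS.
Qed.

End Pack.

Lemma inj_count (A B : eqType) (F : seq A) (T : seq B) (Rl : A -> B -> Prop) :
  uniq F -> uniq T -> (forall e, e \in F -> exists2 u, u \in T & Rl e u) ->
  (forall e f u, e \in F -> f \in F -> Rl e u -> Rl f u -> e = f) ->
  (size F <= size T)%N.
Proof.
elim: F T => [//|e F IH] T /= /andP [eF uF] uT ex inj.
have [u uT' Ru] := ex e (mem_head _ _).
have -> : size T = (size (rem u T)).+1 by rewrite size_rem // prednK // -has_predT; apply/hasP; exists u.
have sub : forall f, f \in F -> f \in e :: F by move=> f fF; rewrite inE fF orbT.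
rewrite ltnS; apply: IH => //; first exact: rem_uniq.
  move=> f fF; have [v vT Rv] := ex f (sub f fF).
  exists v => //; rewrite mem_rem_uniq // inE vT andbT; apply/eqP => vu.
  rewrite vu in Rv; have := inj e f u (mem_head _ _) (sub f fF) Ru Rv.
  by move=> ef; rewrite ef fF in eF.
by move=> f g v fF gF; apply: inj; apply: sub.
Qed.

Lemma sumn_bound (T : eqType) (f : T -> nat) (s : seq T) K :
  (forall x, x \in s -> f x <= K)%N -> (sumn [seq f x | x <- s] <= size s * K)%N.
Proof.
elim: s => [//|x s IH] h /=; rewrite mulSn leq_add ?h ?mem_head //.
by apply: IH => y ys; apply: h; rewrite inE ys orbT.
Qed.

Lemma ex_bound (R : realDomainType) (s : seq R) : exists2 M, 0 < M & forall x, x \in s -> x <= M.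
Proof.
elim: s => [|a s [M M0 hM]]; first by exists 1.
exists (Num.max M `|a| + 1).
  by apply: (le_lt_trans (normr_ge0 a)); rewrite ltr_pwDr // le_max lexx orbT.
have m1 : M <= Num.max M `|a| by rewrite le_max lexx.
have m2 : `|a| <= Num.max M `|a| by rewrite le_max lexx orbT.
move=> x; rewrite inE => /orP [/eqP ->|xs].
  have := ler_norm a; lra.
have := hM x xs; lra.
Qed.

Section Count.
Variables (R : rcfType) (d : nat).
Notation pt := 'rV[R]_d.
Variable s : R.
Hypothesis s1 : 1 < s.

Lemma blocks_flipl (a b : pt) f : blocks s (b, a) f = blocks s (a, b) f.
Proof.
case: f => f1 f2; rewrite /blocks /blocks_oriented /= (distC f2 f1).
by rewrite orbC [X in X || _]andbC [X in _ || X]andbC.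
Qed.

Lemma blocks_flipr (e : pt * pt) a b : blocks s e (b, a) = blocks s e (a, b).
Proof.
case: e => e1 e2; rewrite /blocks /blocks_oriented /= (distC a b).
by rewrite orbC.
Qed.

Lemma close_core (a b a' b' X Y : pt) :
  dist a X <= dist a b / (4 * (2 * s + 2)) -> dist b Y <= dist a b / (4 * (2 * s + 2)) ->
  dist a' X <= dist a' b' / (4 * (2 * s + 2)) -> dist b' Y <= dist a' b' / (4 * (2 * s + 2)) ->
  blocks s (a, b) (a', b') && blocks s (a', b') (a, b).
Proof.
set c := 2 * s + 2 => ha hb ha' hb'.
have c1 : 1 <= c by rewrite /c; have := s1; lra.
have c0 : 0 < c by lra.
set T := dist a b / (4 * c) in ha hb; set T' := dist a' b' / (4 * c) in ha' hb'.
have eT : dist a b = 4 * c * T by rewrite /T; field; rewrite gt_eqF.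
have eT' : dist a' b' = 4 * c * T' by rewrite /T'; field; rewrite gt_eqF.
have T0 : 0 <= T by rewrite /T divr_ge0 ?dist_ge0 // mulr_ge0 // ltW.
have T0' : 0 <= T' by rewrite /T' divr_ge0 ?dist_ge0 // mulr_ge0 // ltW.
have hXY : dist X Y <= dist X a' + dist a' b' + dist b' Y.
  apply: (le_trans (dist_triangle X a' Y)); rewrite -addrA lerD2l.
  exact: dist_triangle.
have hab : dist a b <= dist a X + dist X Y + dist Y b.
  apply: (le_trans (dist_triangle a X b)); rewrite -addrA lerD2l.
  exact: dist_triangle.
have ha'b' : dist a' b' <= dist a' X + dist X Y + dist Y b'.
  apply: (le_trans (dist_triangle a' X b')); rewrite -addrA lerD2l.
  exact: dist_triangle.
have hXY' : dist X Y <= dist X a + dist a b + dist b Y.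
  apply: (le_trans (dist_triangle X a Y)); rewrite -addrA lerD2l.
  exact: dist_triangle.
rewrite (distC X a') (distC Y b) (distC Y b') (distC X a) in hXY hab ha'b' hXY'.
have i1 : 4 * c * T <= 4 * c * T' + 2 * T + 2 * T' by lra.
have i2 : 4 * c * T' <= 4 * c * T + 2 * T + 2 * T' by lra.
have r1 : T <= 3 * T' by nra.
have r2 : T' <= 3 * T by nra.
have daa : dist a a' <= T + T'.
  apply: (le_trans (dist_triangle a X a')); rewrite (distC X a'); lra.
have dbb : dist b b' <= T + T'.
  apply: (le_trans (dist_triangle b Y b')); rewrite (distC Y b'); lra.
have q1 : T + T' <= dist a' b' / c by rewrite ler_pdivlMr // eT'; nra.
have q2 : T + T' <= dist a b / c by rewrite ler_pdivlMr // eT; nra.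
rewrite /blocks /blocks_oriented /= (distC a' a) (distC b' b).
rewrite (le_trans daa q1) (le_trans dbb q1) (le_trans daa q2) (le_trans dbb q2).
by [].
Qed.

End Count.

Section Count2.
Variables (R : rcfType) (d : nat).
Notation pt := 'rV[R]_d.

Lemma edge_count (s : R) (P : seq pt) ord : (0 < d)%N -> 1 < s -> uniq P ->
  valid_order P ord -> forall N : nat, d%:R * (8 * s + 10) <= N%:R ->
  (size (uncoordinated s ord) <= size P * (2 * N + 2) ^ d)%N.
Proof.
move=> d0 s1 uP [uo vo] N hN.
set E := uncoordinated s ord.
have [_ memE _ nbE] := unc_props s ord [::].
rewrite -/(uncoordinated s ord) -/E in memE nbE.
have nbE' : nb s E by apply: nbE => i.
set c := 2 * s + 2.
have c0 : 0 < c by rewrite /c; lra.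
have bee : forall e : pt * pt, blocks s e e.
  move=> [e1 e2]; rewrite /blocks /blocks_oriented /= !distxx.
  by rewrite divr_ge0 ?dist_ge0 // ltW.
have uE : uniq E := nb_uniq bee nbE'.
have EP : forall e, e \in E -> [/\ e.1 \in P, e.2 \in P & e.1 != e.2].
  move=> [e1 e2] /memE [//|]; rewrite vo => /and3P [h1 h2 h3]; by split.
have [M M0 hM] := ex_bound [seq dist xy.1 xy.2 | xy <- [seq (x, y) | x <- P, y <- P]].
have hM' : forall p q, p \in P -> q \in P -> dist p q <= M.
  move=> p q pP qP; apply: hM; apply/mapP; exists (p, q) => //.
  by apply/allpairsP; exists (p, q).
have [rad [hS hPos hCov]] := net_exists uP M0.
set Lam := 8 * s + 10.
pose Qf X := [seq Y <- P | (rad X <= rad Y) && (dist X Y <= Lam * rad X)].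
pose T0 := [seq (X, Y) | X <- P, Y <- Qf X].
pose te (e : pt * pt) := dist e.1 e.2 / (4 * c).
pose Rl (e : pt * pt) (u : pt * pt) :=
  (dist e.1 u.1 <= te e /\ dist e.2 u.2 <= te e) \/
  (dist e.2 u.1 <= te e /\ dist e.1 u.2 <= te e).
have step1 : (size E <= size (undup T0))%N.
  apply: (inj_count (Rl := Rl)) => //; first exact: undup_uniq.
    move=> [a b] eE; have [/= aP bP nab] := EP _ eE.
    set t := te (a, b).
    have t0 : 0 <= t by rewrite /t /te divr_ge0 ?dist_ge0 // mulr_ge0 // ltW.
    have tl : 4 * c * t = dist a b by rewrite /t /te /=; field; rewrite gt_eqF.
    have tM : t <= M.
      have := hM' a b aP bP; have : 1 <= c by rewrite /c; lra.
      move=> h1 h2; nra.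
    have [A AP /andP [tA aA]] := hCov a t aP t0 tM.
    have [B BP /andP [tB bB]] := hCov b t bP t0 tM.
    have dAB : dist A B <= Lam * t.
      have h1 : dist A B <= dist A a + dist a b + dist b B.
        apply: (le_trans (dist_triangle A a B)); rewrite -addrA lerD2l.
        exact: dist_triangle.
      rewrite (distC A a) in h1; rewrite /Lam; rewrite /c in tl; nra.
    have Lam0 : 0 <= Lam by rewrite /Lam; lra.
    have [AB|BA] := leP (rad A) (rad B).
      exists (A, B); last by left.
      rewrite mem_undup; apply/allpairsPdep; exists A, B; split => //.
      rewrite mem_filter BP AB /= andbT; apply: (le_trans dAB); exact: ler_wpM2l.
    exists (B, A); last by right.
    rewrite mem_undup; apply/allpairsPdep; exists B, A; split => //.
    rewrite mem_filter AP (ltW BA) /= andbT distC; apply: (le_trans dAB); exact: ler_wpM2l.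
  move=> [a b] [a' b'] [X Y] eE fE.
  rewrite /Rl /te /= => [] [[h1 h2]|[h1 h2]] [[h3 h4]|[h3 h4]].
  - have /andP [b1 b2] := close_core s1 h1 h2 h3 h4; exact: nb_mutual nbE' eE fE b1 b2.
  - rewrite (distC a' b') in h3 h4.
    have /andP [b1 b2] := close_core s1 h1 h2 h3 h4.
    rewrite blocks_flipr in b1; rewrite blocks_flipl in b2.
    exact: nb_mutual nbE' eE fE b1 b2.
  - rewrite (distC a b) in h1 h2.
    have /andP [b1 b2] := close_core s1 h1 h2 h3 h4.
    rewrite blocks_flipl in b1; rewrite blocks_flipr in b2.
    exact: nb_mutual nbE' eE fE b1 b2.
  - rewrite (distC a b) in h1 h2; rewrite (distC a' b') in h3 h4.
    have /andP [b1 b2] := close_core s1 h1 h2 h3 h4.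
    rewrite blocks_flipl blocks_flipr in b1; rewrite blocks_flipl blocks_flipr in b2.
    exact: nb_mutual nbE' eE fE b1 b2.
apply: (leq_trans step1); apply: (leq_trans (size_undup _)).
rewrite /T0 size_allpairs_dep; apply: sumn_bound => X XP.
apply: (packing (X := X) (rho := rad X) (Lam := Lam)) => //.
- exact: hPos.
- exact: filter_uniq.
- move=> Y Y'; rewrite !mem_filter => /andP [/andP [h1 _] YP] /andP [/andP [h2 _] Y'P] nY.
  apply: le_trans _ (hS Y Y' YP Y'P nY); by rewrite le_min h1 h2.
- move=> Y; rewrite mem_filter => /andP [/andP [_ h] _].
  by [].
Qed.

End Count2.

Lemma edge_trivial (R : rcfType) d (s : R) (P : seq 'rV[R]_d) ord : 1 < s ->
  valid_order P ord -> (size (uncoordinated s ord) <= size P * size P)%N.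
Proof.
move=> s1 [uo vo].
have [_ memE _ nbE] := unc_props s ord [::].
have nbE' : nb s (uncoordinated s ord) by apply: nbE => i.
have bee : forall e : 'rV[R]_d * 'rV[R]_d, blocks s e e.
  move=> [e1 e2]; rewrite /blocks /blocks_oriented /= !distxx.
  by rewrite divr_ge0 ?dist_ge0 //; lra.
have uE := nb_uniq bee nbE'.
apply: (leq_trans (uniq_leq_size uE (s2 := ord) _)).
  by move=> e /memE [].
rewrite -(size_allpairs pair P P); apply: uniq_leq_size => // [[p q]].
by rewrite vo => /and3P [pP qP _]; apply/allpairsP; exists (p, q).
Qed.

Theorem theorem9 (d : nat) : (1 <= d)%N ->
  exists C : nat,
  forall (R : rcfType) (P : seq 'rV[R]_d) (s : R) (ord : seq ('rV[R]_d * 'rV[R]_d)),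
    uniq P -> 1 < s -> valid_order P ord ->
    let E := uncoordinated s ord in
    (forall p q, p \in P -> q \in P ->
       exists w : seq 'rV[R]_d,
         path (adj E) p w /\ last p w = q /\
         path_len p w <= (s + 1) / (s - 1) * dist p q)
    /\ (size E)%:R <= C%:R * (size P)%:R * s ^+ d.
Proof.
move=> d1; exists ((40 * d) ^ d)%N => R P s ord uP s1 vo E; split.
  exact: spanner.
set n := size P.
have s0 : 0 <= s by lra.
have sd : s <= s ^+ d.
  rewrite -(prednK d1) exprS -{1}(mulr1 s) ler_wpM2l // exprn_ege1 //; lra.
have D1 : (1 : R) <= d%:R by rewrite ler1n.
have C1 : (1 : R) <= ((40 * d) ^ d)%N%:R by rewrite ler1n expn_gt0 muln_gt0 d1.
have n0 : (0 : R) <= n%:R by rewrite ler0n.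
have [ns|sn] := leP n%:R s.
  have h := edge_trivial s1 vo; rewrite -(ler_nat R) natrM in h.
  apply: (le_trans h).
  have h1 : n%:R * n%:R <= n%:R * s ^+ d :> R.
    by rewrite ler_wpM2l //; exact: le_trans ns sd.
  apply: (le_trans h1); rewrite -mulrA -[leLHS]mul1r ler_wpM2r //.
  by rewrite mulr_ge0 // exprn_ge0.
have x0 : (0 : R) <= d%:R * (8 * s + 10) by rewrite mulr_ge0 //; lra.
have xm : d%:R * (8 * s + 10) < (d * (8 * n + 10))%N%:R.
  rewrite natrM natrD natrM; have : (0 : R) < d%:R by lra.
  move=> hd; rewrite ltr_pM2l //; lra.
have [N [hN1 hN2]] := nat_ceil x0 xm.
have h := edge_count d1 s1 uP vo hN1; rewrite -(ler_nat R) natrM natrX in h.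
apply: (le_trans h).
have h2 : ((2 * N + 2)%N%:R : R) <= 40 * d%:R * s.
  rewrite natrD natrM; nra.
have h3 : ((2 * N + 2)%N%:R : R) ^+ d <= (40 * d%:R * s) ^+ d.
  by rewrite lerXn2r // nnegrE ?ler0n // mulr_ge0 // mulr_ge0 //; lra.
rewrite (mulrC _ n%:R) -mulrA ler_wpM2l // natrX natrM exprMn.
by apply: (le_trans h3); rewrite !exprMn.
Qed.
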